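(* Let $(G,c)$ be a tensor network template. Suppose there is an integer $d>0$ such that for every edge $e$ the capacity $c_e$ is a power of $d$ (that is, $c_e=d^{m_e}$ with $m_e\in\mathbb{Z}_{\ge0}$). Then $\mathrm{QMF}(G,c)=\mathrm{QMC}(G,c)$.
   Context: A tensor network template $(G,c)$ consists of a finite undirected graph $G$ (multiple edges allowed) with edge set $E$ whose vertex set is partitioned as $S\sqcup T\sqcup V$. Every element of $S$ (inputs) and every element of $T$ (outputs) is an open end of degree $1$; the elements of $V$ are called vertices. For $u\in S\sqcup T$, $e(u)$ denotes the edge incident to $u$. A capacity function $c:E\to\mathbb{Z}_{>0}$ is given, and to each edge $e$ one associates $\mathbb{C}^{c_e}$ with a fixed basis. At each vertex $v$ of degree $d_v$ an ordering $e(v,1),\dots,e(v,d_v)$ of the incident edge-ends is fixed. A tensor assignment $\mathcal T=(\mathcal T_v)_{v\in V}$ chooses $\mathcal T_v\in\bigotimes_{i=1}^{d_v}\mathbb{C}^{c_{e(v,i)}}$ for each $v$. Let $V_S=\bigotimes_{u\in S}\mathbb{C}^{c_{e(u)}}$ and $V_T=\bigotimes_{u\in T}\mathbb{C}^{c_{e(u)}}$. Contracting the network along all edges gives $\beta(G,c;\mathcal T)\in\mathrm{Hom}(V_S,V_T)$, whose matrix entries are $\langle I_T|\beta|I_S\rangle=\sum_W\prod_{v\in V}(\mathcal T_v)_{W|_v}$. Here $W$ ranges over all assignments of basis indices to all edges that agree with $I_S$ on the input edges and with $I_T$ on the output edges, and $W|_v$ is the tuple of indices on $e(v,1),\dots,e(v,d_v)$.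 The quantum max-flow is $\mathrm{QMF}(G,c)=\max_{\mathcal T}\operatorname{rank}\beta(G,c;\mathcal T)$. An edge cut set is a set $C\subseteq E$ for which there is a partition $S\sqcup T\sqcup V=\bar S\sqcup\bar T$ with $S\subseteq\bar S$, $T\subseteq\bar T$, and $C$ equal to the set of edges having one endpoint in $\bar S$ and the other in $\bar T$. The quantum min-cut is $\mathrm{QMC}(G,c)=\min_C\prod_{e\in C}c_e$, the minimum taken over all edge cut sets $C$. *)

(* Defs.v *)
From HB Require Import structures.
From mathcomp Require Import all_boot all_order all_algebra.
Set Implicit Arguments. Unset Strict Implicit. Unset Printing Implicit Defensive.
Import Order.TTheory GRing.Theory Num.Theory.

(* A tensor network template:
   - S (inputs), T (outputs), V (vertices), E (edges) are finite types;
     the node set is the disjoint union S + (T + V), so it is partitioned as S ⊔ T ⊔ V.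
   - ends e = the two endpoints of the (undirected) edge e; the order of the pair
     is irrelevant for every notion below.  Multiple edges and loops are allowed.
   - c : E -> nat is the capacity function. *)

Definition node (S T V : finType) := (S + (T + V))%type.

Section TensorNetwork.
Variables (S T V E : finType) (ends : E -> node S T V * node S T V) (c : E -> nat).

(* edge-ends (half-edges): (e, true) is the end of e at (ends e).1,
   (e, false) the end at (ends e).2 *)
Definition hend (h : E * bool) : node S T V :=
  if h.2 then (ends h.1).1 else (ends h.1).2.

Definition open_ends_degree_one : Prop :=
  (forall u : S, #|[pred h : E * bool | hend h == inl u]| = 1) /\
  (forall t : T, #|[pred h : E * bool | hend h == inr (inl t)]| = 1).

Definition capS (u : S) : nat :=
  if [pick h : E * bool | hend h == inl u] is Some h then c h.1 else 1.
Definition capT (t : T) : nat :=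
  if [pick h : E * bool | hend h == inr (inl t)] is Some h then c h.1 else 1.

Definition edge_assign := {dffun forall e : E, 'I_(c e)}.
Definition in_assign := {dffun forall u : S, 'I_(capS u)}.    (* basis of V_S *)
Definition out_assign := {dffun forall t : T, 'I_(capT t)}.   (* basis of V_T *)

Definition incident (v : V) := {h : E * bool | hend h == inr (inr v)}.
Definition local_assign (v : V) := {dffun forall h : incident v, 'I_(c (val h).1)}.

Definition restrict (W : edge_assign) (v : V) : local_assign v :=
  [ffun h : incident v => W (val h).1].

Definition agrees (IS : in_assign) (IT : out_assign) (W : edge_assign) : bool :=
  [forall h : E * bool,
     match hend h with
     | inl u => val (W h.1) == val (IS u)
     | inr (inl t) => val (W h.1) == val (IT t)
     | inr (inr _) => true
     end].

Section Field.
Variable C : numClosedFieldType.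

(* a tensor assignment: T_v ∈ ⊗_{edge-ends at v} C^{c_e}, given by its coordinates *)
Definition tensor_assign := forall v : V, {ffun local_assign v -> C}.

Definition beta_entry (Tn : tensor_assign) (IS : in_assign) (IT : out_assign) : C :=
  \sum_(W : edge_assign | agrees IS IT W) \prod_(v : V) Tn v (restrict W v).

(* matrix of beta(G,c;T) : V_S -> V_T in the tensor-product bases *)
Definition beta_mx (Tn : tensor_assign) : 'M[C]_(#|{: out_assign}|, #|{: in_assign}|) :=
  \matrix_(i, j) beta_entry Tn (enum_val j) (enum_val i).

Definition is_QMF (n : nat) : Prop :=
  (exists Tn : tensor_assign, \rank (beta_mx Tn) = n) /\
  (forall Tn : tensor_assign, (\rank (beta_mx Tn) <= n)%N).

End Field.

(* cuts: X = set of vertices put in \bar S (inputs are in \bar S, outputs in \bar T) *)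
Definition side (X : {set V}) (x : node S T V) : bool :=
  match x with
  | inl _ => true
  | inr (inl _) => false
  | inr (inr v) => v \in X
  end.

Definition cut_set (X : {set V}) : {set E} :=
  [set e | side X (ends e).1 != side X (ends e).2].

Definition cut_cap (X : {set V}) : nat := (\prod_(e in cut_set X) c e)%N.

Definition QMC : nat := \big[minn/cut_cap set0]_(X : {set V}) cut_cap X.

End TensorNetwork.

(* Main.v *)
Require Import Defs.
From HB Require Import structures.
From mathcomp Require Import all_boot all_order all_algebra.
From mathcomp Require Import zify ring lra.
Set Implicit Arguments. Unset Strict Implicit. Unset Printing Implicit Defensive.
Import Order.TTheory GRing.Theory Num.Theory.

Section Split.
Variables (I : finType) (U : I -> finType) (R : comRingType).
Local Notation DF := {dffun forall i : I, U i}.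

Definition mg (A : pred I) (W1 W2 : DF) : DF :=
  [ffun i => if A i then W1 i else W2 i].

Lemma mgE A W1 W2 i : mg A W1 W2 i = if A i then W1 i else W2 i.
Proof. by rewrite ffunE. Qed.

Local Open Scope ring_scope.

Lemma split_sum (A : pred I) (w0 : DF) (f g : DF -> R) :
  (forall W W', f (mg A W W') = f W) -> (forall W W', g (mg A W' W) = g W) ->
  \sum_W f W * g W =
  (\sum_(W | mg A W w0 == W) f W) * (\sum_(W | mg A w0 W == W) g W).
Proof.
move=> hf hg.
symmetry.
rewrite big_distrl /=.
under eq_bigr do rewrite big_distrr /=.
rewrite pair_big /=.
symmetry.
rewrite (reindex_onto (fun p : DF * DF => mg A p.1 p.2)
  (fun W => (mg A W w0, mg A w0 W))) /=; last first.
  by move=> W _; apply/ffunP => i; rewrite !ffunE; case: (A i).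
apply: eq_big.
  case=> W1 W2 /=.
  have -> : mg A (mg A W1 W2) w0 = mg A W1 w0.
    by apply/ffunP => i; rewrite !ffunE; case: (A i).
  have -> : mg A w0 (mg A W1 W2) = mg A w0 W2.
    by apply/ffunP => i; rewrite !ffunE; case: (A i).
  by rewrite xpair_eqE.
case=> W1 W2 /= /andP [/eqP h1 /eqP h2].
by rewrite hf hg.
Qed.
End Split.

Section Upper.
Variables (S T V E : finType) (ends : E -> node S T V * node S T V) (c : E -> nat).
Variable C : numClosedFieldType.
Hypothesis hc0 : forall e, (0 < c e)%N.
Variable X : {set V}.
Variable Tn : tensor_assign ends c C.

Local Notation EA := (edge_assign c).
Definition w0 : EA := [ffun e => Ordinal (hc0 e)].
Definition Ap : pred E := fun e => side X (ends e).1 || side X (ends e).2.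
Definition Bp : pred E := fun e => ~~ side X (ends e).1 || ~~ side X (ends e).2.
Definition Qp : pred E := fun e => e \in cut_set ends X.

Lemma QA e : Qp e -> Ap e.
Proof. by rewrite /Qp /Ap inE; case: (side X _); case: (side X _). Qed.
Lemma QB e : Qp e -> Bp e.
Proof. by rewrite /Qp /Bp inE; case: (side X _); case: (side X _). Qed.
Lemma notQB e : ~~ Qp e -> Bp e -> ~~ Ap e.
Proof. by rewrite /Qp /Bp /Ap inE; case: (side X _); case: (side X _). Qed.

Lemma hend_A h : side X (hend ends h) -> Ap h.1.
Proof. by case: h => e [] /=; rewrite /hend /Ap /= => ->; rewrite ?orbT. Qed.
Lemma hend_B h : ~~ side X (hend ends h) -> Bp h.1.
Proof. by case: h => e [] /=; rewrite /hend /Bp /= => ->; rewrite ?orbT. Qed.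

Definition agS (IS : in_assign ends c) (W : EA) : bool :=
  [forall h : E * bool, if hend ends h is inl u then val (W h.1) == val (IS u) else true].
Definition agT (IT : out_assign ends c) (W : EA) : bool :=
  [forall h : E * bool, if hend ends h is inr (inl t) then val (W h.1) == val (IT t) else true].

Lemma agreesE IS IT W : agrees IS IT W = agS IS W && agT IT W.
Proof.
apply/idP/andP.
  move/forallP=> H; split; apply/forallP=> h; move: (H h);
  by case: (hend ends h) => [u|[t|v]].
case=> /forallP H1 /forallP H2; apply/forallP=> h; move: (H1 h) (H2 h).
by case: (hend ends h) => [u|[t|v]].
Qed.

Local Open Scope ring_scope.

Definition fS IS (W : EA) : C :=
  (agS IS W)%:R * \prod_(v in X) Tn v (restrict ends W v).
Definition gT IT (W : EA) : C :=
  (agT IT W)%:R * \prod_(v | v \notin X) Tn v (restrict ends W v).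

Lemma beta_split IS IT : beta_entry Tn IS IT = \sum_W fS IS W * gT IT W.
Proof.
rewrite /beta_entry big_mkcond; apply: eq_bigr => W _.
rewrite agreesE (bigID (mem X)) /= /fS /gT.
by case: (agS IS W); case: (agT IT W); rewrite /= ?mul1r ?mul0r ?mulr0 ?mulr1.
Qed.

Lemma fS_cong IS (W W' : EA) : (forall e, Ap e -> W e = W' e) -> fS IS W = fS IS W'.
Proof.
move=> hW; rewrite /fS; congr ((nat_of_bool _)%:R * _).
  rewrite /agS; apply/idP/idP => /forallP H; apply/forallP => h; move: (H h);
  case E1: (hend ends h) => [u|[t|v]] //; by rewrite (hW h.1) // hend_A // E1.
apply: eq_bigr => v vX; congr (Tn v _); apply/ffunP => h; rewrite !ffunE.
apply: hW; apply: hend_A; by rewrite (eqP (valP h)) /=.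
Qed.

Lemma gT_cong IT (W W' : EA) : (forall e, Bp e -> W e = W' e) -> gT IT W = gT IT W'.
Proof.
move=> hW; rewrite /gT; congr ((nat_of_bool _)%:R * _).
  rewrite /agT; apply/idP/idP => /forallP H; apply/forallP => h; move: (H h);
  case E1: (hend ends h) => [u|[t|v]] //; by rewrite (hW h.1) // hend_B // E1.
apply: eq_bigr => v vX; congr (Tn v _); apply/ffunP => h; rewrite !ffunE.
apply: hW; apply: hend_B; by rewrite (eqP (valP h)) /=.
Qed.

Definition uK (K : EA) IT : C := \sum_(W | mg Ap w0 W == W) gT IT (mg Qp K W).
Definition vK (K : EA) IS : C :=
  \sum_(W | mg Ap W w0 == W) ((mg Qp W w0 == K)%:R * fS IS W).

Lemma entry_decomp IS IT :
  beta_entry Tn IS IT = \sum_(K | mg Qp K w0 == K) vK K IS * uK K IT.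
Proof.
rewrite beta_split.
rewrite (partition_big (fun W => mg Qp W w0) (fun K => mg Qp K w0 == K)) /=; last first.
  by move=> W _; apply/eqP/ffunP => e; rewrite !ffunE; case: (Qp e).
apply: eq_bigr => K _.
rewrite /vK /uK -split_sum; last first.
- move=> W W'; apply: gT_cong => e Be; rewrite !ffunE.
  case Qe: (Qp e) => //; by rewrite (negbTE (notQB (negbT Qe) Be)).
- move=> W W'; congr (_ * _); last first.
    by apply: fS_cong => e Ae; rewrite ffunE Ae.
  congr ((_ : bool)%:R); congr (_ == _); apply/ffunP => e; rewrite !ffunE.
  by case Qe: (Qp e); rewrite ?(QA Qe).
rewrite big_mkcond; apply: eq_bigr => W _.
case: eqP => [hK|_]; last by rewrite !mul0r.
rewrite mul1r; congr (_ * gT IT _).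
by apply/ffunP => e; rewrite -hK !ffunE; case: (Qp e).
Qed.

Lemma rank_sum (m n : nat) (J : finType) (P : pred J) (M : J -> 'M[C]_(m, n)) :
  (\rank (\sum_(j | P j) M j)%R <= \sum_(j | P j) \rank (M j))%N.
Proof.
apply: (big_rec2 (fun y1 y2 => (\rank y1 <= y2)%N)); first by rewrite mxrank0.
move=> j y1 y2 _ h; apply: leq_trans (mxrank_add _ _) _; by rewrite leq_add2l.
Qed.

Lemma card_KS : #|[pred K : EA | mg Qp K w0 == K]| = cut_cap ends c X.
Proof.
pose F := fun e => (fun k : 'I_(c e) => Qp e || (k == w0 e)) : pred 'I_(c e).
have -> : #|[pred K : EA | mg Qp K w0 == K]| = #|(family F : simpl_pred EA)|.
  apply: eq_card => K; rewrite !inE; apply/eqP/familyP.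
  move=> hK e; rewrite /F -hK ffunE unfold_in /=; by case: (Qp e) => /=.
  move=> hK; apply/ffunP => e; rewrite ffunE; case Qe: (Qp e) => //.
  by move: (hK e); rewrite /F unfold_in /= Qe => /eqP.
rewrite card_family foldrE big_map big_enum /= /cut_cap.
rewrite [RHS]big_mkcond /=; apply: eq_bigr => e _.
rewrite /F; case Qe: (Qp e); move: Qe; rewrite /Qp => Qe; rewrite Qe.
  by rewrite -[RHS]card_ord; apply: eq_card.
by rewrite -(card1 (w0 e)); apply: eq_card => k; rewrite !inE.
Qed.

Theorem upper_bound : (\rank (beta_mx Tn) <= cut_cap ends c X)%N.
Proof.
pose colK (K : EA) : 'M[C]_(#|{: out_assign ends c}|, 1) :=
  \matrix_(i, j) uK K (enum_val i).
pose rowK (K : EA) : 'M[C]_(1, #|{: in_assign ends c}|) :=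
  \matrix_(i, j) vK K (enum_val j).
have -> : beta_mx Tn = \sum_(K | mg Qp K w0 == K) (colK K *m rowK K).
  apply/matrixP => i j; rewrite !mxE summxE entry_decomp.
  apply: eq_bigr => K _; rewrite !mxE big_ord1 !mxE mulrC //.
apply: leq_trans (rank_sum _ _) _.
apply: (@leq_trans (\sum_(K | mg Qp K w0 == K) 1)%N).
  apply: leq_sum => K _.
  apply: leq_trans (mxrankM_maxr _ _) _; exact: rank_leq_row.
by rewrite sum1_card card_KS.
Qed.

End Upper.

Section Flow.
Variables (S T V E : finType) (ends : E -> node S T V * node S T V) (m : E -> nat).
Local Notation N := (node S T V).

Definition tl (a : E * bool) : N := hend ends a.
Definition hd (a : E * bool) : N := hend ends (a.1, ~~ a.2).
Definition isIn (x : N) : bool := if x is inl _ then true else false.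
Definition isOut (x : N) : bool := if x is inr (inl _) then true else false.
Definition isVx (x : N) : bool := if x is inr (inr _) then true else false.

Lemma tl_true e : tl (e, true) = (ends e).1. Proof. by []. Qed.
Lemma tl_false e : tl (e, false) = (ends e).2. Proof. by []. Qed.
Lemma hd_true e : hd (e, true) = (ends e).2. Proof. by []. Qed.
Lemma hd_false e : hd (e, false) = (ends e).1. Proof. by []. Qed.

Fixpoint good (x : N) (p : seq (E * bool)) : bool :=
  match p with
  | [::] => false
  | a :: p' => (tl a == x) &&
       (if p' is [::] then isOut (hd a) else isVx (hd a) && good (hd a) p')
  end.

Definition endp (x : N) (p : seq (E * bool)) : N := last x (map hd p).

Local Open Scope ring_scope.

Lemma good_tele (z : N) : forall p x, good x p ->
  \sum_(a <- p) (((tl a == z)%:R - (hd a == z)%:R) : int) =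
  (x == z)%:R - (endp x p == z)%:R.
Proof.
elim=> [|a p IH] x //= /andP [/eqP hx].
rewrite big_cons hx; case: p IH => [|b p] IH.
  by rewrite big_nil addr0.
case/andP=> _ /IH ->; rewrite /endp /=; ring.
Qed.

Lemma good_endT : forall p x, good x p -> isOut (endp x p).
Proof.
elim=> [|a p IH] x //= /andP [_].
by case: p IH => [|b p] IH //= /andP [_ /IH].
Qed.

Lemma good_out : forall p x, good x p -> exists2 a, a \in p & isOut (hd a).
Proof.
elim=> [|a p IH] x //= /andP [_].
case: p IH => [|b p] IH.
  by move=> h; exists a; rewrite ?inE ?eqxx.
case/andP=> _ /IH [a' a'p h]; exists a' => //; by rewrite inE a'p orbT.
Qed.

Definition sg (a : E * bool) : int := if a.2 then 1 else -1.
Definition fa (phi : E -> int) (a : E * bool) : int := sg a * phi a.1.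
Definition net (phi : E -> int) (x : N) : int := \sum_(a | tl a == x) fa phi a.
Definition cons_ok (phi : E -> int) := forall v : V, net phi (inr (inr v)) = 0.
Definition cap_ok (phi : E -> int) := forall e, `|phi e| <= (m e)%:Z.
Definition value (phi : E -> int) : int := \sum_(u : S) net phi (inl u).
Definition scutz (X : {set V}) : int := \sum_(e in cut_set ends X) (m e)%:Z.

Lemma norm_fa phi a : `|fa phi a| = `|phi a.1|.
Proof. by rewrite /fa /sg; case: a.2; rewrite ?mul1r ?mulN1r ?normrN. Qed.

Lemma sum_arcs (F : E * bool -> int) :
  \sum_a F a = \sum_e (F (e, true) + F (e, false)).
Proof.
rewrite (eq_bigr (fun p => F (p.1, p.2))); last by case.
rewrite -(pair_bigA _ (fun e b => F (e, b))) /=.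
by apply: eq_bigr => e _; rewrite big_bool.
Qed.

Lemma cutid phi X : cons_ok phi ->
  value phi = \sum_e phi e * ((side X (ends e).1)%:R - (side X (ends e).2)%:R).
Proof.
move=> hc.
have H1 : \sum_(x : N) (side X x)%:R * net phi x = value phi.
  rewrite big_sumType /= big_sumType /=.
  rewrite (eq_bigr (fun u => net phi (inl u))); last by move=> u _; rewrite mul1r.
  rewrite [\sum_(t : T) _]big1; last by move=> t _; rewrite mul0r.
  rewrite [\sum_(v : V) _]big1; last by move=> v _; rewrite hc mulr0.
  by rewrite !addr0.
rewrite -H1.
have H2 : \sum_(x : N) (side X x)%:R * net phi x =
          \sum_a (side X (tl a))%:R * fa phi a.
  rewrite /net; under eq_bigr do rewrite big_distrr /=.
  under eq_bigr do rewrite big_mkcond /=.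
  rewrite exchange_big /=; apply: eq_bigr => a _.
  rewrite (bigD1 (tl a)) //= eqxx big1 ?addr0 // => x /negbTE.
  by rewrite eq_sym => ->.
rewrite H2 sum_arcs; apply: eq_bigr => e _.
rewrite /fa /sg /=; ring.
Qed.

Definition rstep (ok : pred (E * bool)) : rel N := fun x y =>
  ~~ isOut x && ~~ isIn y && [exists a, ok a && (tl a == x) && (hd a == y)].

Lemma arc_ends a y : (tl a == y) || (hd a == y) =
  ((ends a.1).1 == y) || ((ends a.1).2 == y).
Proof. by case: a => e []; rewrite /tl /hd /hend //= orbC. Qed.

Lemma walk_to_arcs ok : forall q x, path (rstep ok) x q -> uniq (x :: q) ->
  isOut (last x q) -> q != [::] ->
  exists p, [/\ good x p, all ok p, uniq (map fst p) &
     forall a, a \in p -> (tl a \in x :: q) && (hd a \in x :: q)].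
Proof.
elim=> [|y q IH] x //= /andP [hxy hpath] /andP [xnq uq] hlast _.
move: hxy => /andP [/andP [nTx nSy] /existsP [a /andP [/andP [oka /eqP tla] /eqP hda]]].
case: q IH hpath uq hlast xnq => [|z q] IH hpath uq hlast xnq.
  exists [:: a]; split => //=.
  - by rewrite tla eqxx hda hlast.
  - by rewrite oka.
  - by move=> b; rewrite inE => /eqP ->; rewrite tla hda !inE !eqxx orbT.
have [p [gp okp up hp]] := IH y hpath uq hlast isT.
have yV : isVx y.
  move: hpath => /= /andP [/andP [/andP [nTy _] _] _].
  by move: nSy nTy; case: y {hda gp hp xnq uq hlast} => [|[]].
exists (a :: p); split => /=.
- rewrite tla eqxx /= hda.
  case: p gp {okp up hp} => [|b p] //= gp; by rewrite yV.
- by rewrite oka okp.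
- rewrite up andbT; apply/negP => /mapP [b bp ea].
  have := hp b bp => /andP [hb1 hb2].
  have : (tl a == x) || (hd a == x) by rewrite tla eqxx.
  rewrite arc_ends ea -arc_ends => /orP [] /eqP eb.
    by move: hb1; rewrite eb (negbTE xnq).
  by move: hb2; rewrite eb (negbTE xnq).
- move=> b; rewrite inE => /orP [/eqP ->|bp].
    by rewrite tla hda !inE !eqxx /= orbT.
  by have := hp b bp; rewrite !inE => /andP [-> ->]; rewrite !orbT.
Qed.

Lemma reach (ok : pred (E * bool)) :
  (exists u p, [/\ good (inl u) p, all ok p & uniq (map fst p)]) \/
  (exists X : {set V}, forall a, ok a -> side X (tl a) -> side X (hd a)).
Proof.
pose R := [set x : N | [exists u : S, connect (rstep ok) (inl u) x]].
case: (boolP [exists t : T, inr (inl t) \in R]) => [/existsP [t]|nt].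
  rewrite inE => /existsP [u] /connectP [q0 hq0 hlast0].
  move: hlast0; case: (shortenP hq0) => q hq uq _ hl.
  left; exists u.
  have qn : q != [::] by case: q hq uq hl => //=.
  have hT : isOut (last (inl u) q) by rewrite -hl.
  have [p [gp okp up _]] := walk_to_arcs hq uq hT qn.
  by exists p.
right; exists [set v | inr (inr v) \in R] => a oka.
have Rreach x y : x \in R -> rstep ok x y -> y \in R.
  rewrite !inE => /existsP [u hu] hxy; apply/existsP; exists u.
  by apply: connect_trans hu (connect1 hxy).
case Ey: (hd a) => [u|[t|v]] //=; case Ex: (tl a) => [u'|[t'|v']] //= hx.
- have : inr (inl t) \in R.
    apply: (Rreach (inl u')); first by rewrite inE; apply/existsP; exists u'.
    by rewrite /rstep /=; apply/existsP; exists a; rewrite oka Ex Ey !eqxx.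
  by move=> h; move/existsP: nt; case; exists t.
- have : inr (inl t) \in R.
    apply: (Rreach (inr (inr v'))); first by move: hx; rewrite inE.
    by rewrite /rstep /=; apply/existsP; exists a; rewrite oka Ex Ey !eqxx.
  by move=> h; move/existsP: nt; case; exists t.
- rewrite inE; apply: (Rreach (inl u')); first by rewrite inE; apply/existsP; exists u'.
  by rewrite /rstep /=; apply/existsP; exists a; rewrite oka Ex Ey !eqxx.
- rewrite inE; apply: (Rreach (inr (inr v'))); first by move: hx; rewrite inE.
  by rewrite /rstep /=; apply/existsP; exists a; rewrite oka Ex Ey !eqxx.
Qed.


Definition upd (phi : E -> int) (p : seq (E * bool)) (s : int) : E -> int :=
  fun e => phi e + s * \sum_(a <- p | a.1 == e) sg a.

Lemma sgsg a : sg a * sg a = 1.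
Proof. by rewrite /sg; case: a.2; rewrite ?mulr1 ?mulrNN ?mulr1. Qed.

Lemma fa_upd phi p s b : fa (upd phi p s) b =
  fa phi b + s * \sum_(a <- p) (a.1 == b.1)%:R * (sg a * sg b).
Proof.
rewrite /fa /upd big_mkcond mulrDr; congr (_ + _).
rewrite mulrCA; congr (s * _); rewrite big_distrr; apply: eq_bigr => a _.
by case: (a.1 == b.1) => /=; ring.
Qed.

Lemma inner a z : \sum_(b | tl b == z) (a.1 == b.1)%:R * (sg a * sg b) =
   (tl a == z)%:R - (hd a == z)%:R.
Proof.
rewrite big_mkcond sum_arcs (bigD1 a.1) //= big1 ?addr0; last first.
  move=> e /negbTE ne; rewrite [a.1 == e]eq_sym ne.
  by case: (tl (e, true) == z); case: (tl (e, false) == z) => /=; ring.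
case: a => e [] /=; rewrite /sg /= eqxx;
  case: (tl (e, true) == z); case: (tl (e, false) == z) => /=; ring.
Qed.

Lemma net_upd phi p s z : net (upd phi p s) z =
  net phi z + s * \sum_(a <- p) ((tl a == z)%:R - (hd a == z)%:R).
Proof.
rewrite /net; under eq_bigr do rewrite fa_upd.
rewrite big_split /=; congr (_ + _); rewrite -big_distrr /=; congr (s * _).
rewrite exchange_big /=; apply: eq_bigr => a _; exact: inner.
Qed.

Lemma upd_notin phi p s e : e \notin map fst p -> upd phi p s e = phi e.
Proof.
move=> ne; rewrite /upd big1_seq ?mulr0 ?addr0 //.
move=> a /andP [/eqP ea ap]; by move: ne; rewrite -ea (map_f fst ap).
Qed.

Lemma sum_uniq p a : uniq (map fst p) -> a \in p ->
  \sum_(a' <- p | a'.1 == a.1) sg a' = sg a.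
Proof.
elim: p => [|b p IH] //= /andP [nb up]; rewrite inE big_cons => /orP [/eqP ->|ap].
  rewrite eqxx big1_seq ?addr0 // => a' /andP [/eqP ea a'p].
  by move: nb; rewrite -ea (map_f fst a'p).
have -> : (b.1 == a.1) = false.
  by apply/eqP => e; move: nb; rewrite e (map_f fst ap).
exact: IH.
Qed.

Lemma fa_upd_in phi p s a : uniq (map fst p) -> a \in p ->
  fa (upd phi p s) a = fa phi a + s.
Proof.
move=> up ap; rewrite /fa /upd sum_uniq // mulrDr mulrCA sgsg mulr1 //.
Qed.

Lemma upd_cap phi p s : cap_ok phi -> uniq (map fst p) ->
  (forall a, a \in p -> `|fa phi a + s| <= (m a.1)%:Z) -> cap_ok (upd phi p s).
Proof.
move=> hc up hp e; case: (boolP (e \in map fst p)) => [/mapP [a ap ->]|ne].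
  by rewrite -norm_fa fa_upd_in // hp.
by rewrite upd_notin.
Qed.

Lemma upd_ok phi p s u : cons_ok phi -> good (inl u) p ->
  cons_ok (upd phi p s) /\ value (upd phi p s) = value phi + s.
Proof.
move=> hc gp; have hT := good_endT gp.
split.
  move=> v; rewrite net_upd hc (good_tele _ gp) add0r.
  by case: (endp (inl u) p) hT => [|[]] //= t _; rewrite subrr mulr0.
rewrite /value; under eq_bigr do rewrite net_upd (good_tele _ gp).
rewrite big_split /= -big_distrr /=; congr (_ + _).
rewrite (bigD1 u) //= eqxx big1.
  by case: (endp (inl u) p) hT => [|[]] //= t _; rewrite subr0 addr0 mulr1.
move=> u' ne; case: (endp (inl u) p) hT => [|[]] //= t _.
by rewrite (_ : (inl u == inl u' :> N) = false) ?subrr //; apply/eqP => [[e]]; move: ne; rewrite e eqxx.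
Qed.

Lemma cap_fa phi a : cap_ok phi -> - (m a.1)%:Z <= fa phi a <= (m a.1)%:Z.
Proof. by move=> hc; rewrite -ler_norml norm_fa. Qed.

Definition res phi a := fa phi a < (m a.1)%:Z.
Definition pos phi a := 0 < fa phi a.

Lemma scutzE X : scutz X = \sum_e (if e \in cut_set ends X then (m e)%:Z else 0).
Proof. by rewrite /scutz big_mkcond. Qed.

Lemma augment phi : cap_ok phi -> cons_ok phi ->
  (exists phi', [/\ cap_ok phi', cons_ok phi' & value phi' = value phi + 1]) \/
  (exists X, scutz X <= value phi).
Proof.
move=> hcap hcon.
case: (reach (res phi)) => [[u [p [gp okp up]]]|[X hX]].
  left; exists (upd phi p 1).
  have [h1 h2] := upd_ok 1 hcon gp; split => //.
  apply: upd_cap => // a ap; have := allP okp a ap; rewrite /res => h.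
  have := cap_fa a hcap; rewrite ler_norml => /andP [h3 h4].
  set x := fa phi a in h h3 h4 *; set y := m a.1 in h h3 h4 *; apply/andP; split; lia.
right; exists X; rewrite (cutid X hcon) scutzE; apply: ler_sum => e _.
rewrite inE.
case h1: (side X (ends e).1); case h2: (side X (ends e).2) => /=.
- by rewrite subrr mulr0.
- have : ~~ res phi (e, true).
    by apply/negP => r; have := hX _ r; rewrite tl_true hd_true h1 h2 => /(_ isT).
  rewrite /res /fa /sg /= mul1r -leNgt => h; rewrite subr0 mulr1 //.
- have : ~~ res phi (e, false).
    by apply/negP => r; have := hX _ r; rewrite tl_false hd_false h1 h2 => /(_ isT).
  rewrite /res /fa /sg /= mulN1r -leNgt => h; rewrite sub0r mulrN1 //.
- by rewrite subrr mulr0.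
Qed.

Lemma weak_dual phi X : cap_ok phi -> cons_ok phi -> value phi <= scutz X.
Proof.
move=> hcap hcon; rewrite (cutid X hcon) scutzE; apply: ler_sum => e _.
rewrite inE.
have := hcap e; rewrite ler_norml => /andP [h3 h4].
case h1: (side X (ends e).1); case h2: (side X (ends e).2) => /=.
- by rewrite subrr mulr0.
- by rewrite subr0 mulr1.
- by rewrite sub0r mulrN1 -lerNl.
- by rewrite subrr mulr0.
Qed.

Lemma maxflow : exists phi, [/\ cap_ok phi, cons_ok phi & exists X, scutz X <= value phi].
Proof.
have iter : forall k : nat, exists phi, [/\ cap_ok phi, cons_ok phi &
    ((k%:Z <= value phi) \/ exists X, scutz X <= value phi)].
  elim=> [|k [phi [hcap hcon hk]]].
    exists (fun _ => 0); split.
    - by move=> e; rewrite normr0.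
    - by move=> v; rewrite /net big1 // => a _; rewrite /fa mulr0.
    - by left; rewrite /value big1 // => u _; rewrite /net big1 // => a _; rewrite /fa mulr0.
  case: hk => [hk|hX]; last by exists phi; split => //; right.
  case: (augment hcap hcon) => [[phi' [h1 h2 h3]]|hX]; last by exists phi; split => //; right.
  exists phi'; split => //; left; rewrite h3; move: hk; lia.
have [phi [hcap hcon [hk|//]]] := iter (absz (scutz set0)).+1; last by exists phi.
have := weak_dual set0 hcap hcon.
have h0 : 0 <= scutz set0 by apply: sumr_ge0.
move: hk; rewrite -[scutz set0]gez0_abs //; lia.
Qed.

Definition slotof (ai : (E * bool) * nat) : E * nat := (ai.1.1, ai.2).

Lemma decompose : forall n phi, cap_ok phi -> cons_ok phi -> value phi = n%:Z ->
  exists rs : seq (seq ((E * bool) * nat)),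
  [/\ size rs = n, all (fun r => [exists u, good (inl u) (map fst r)]) rs,
      uniq (flatten (map (map slotof) rs)) &
      forall r ai, r \in rs -> ai \in r -> (ai.2)%:Z < `|phi ai.1.1|].
Proof.
elim=> [|n IH] phi hcap hcon hv.
  by exists [::]; split.
case: (reach (pos phi)) => [[u [p [gp okp up]]]|[X hX]]; last first.
  have : value phi <= 0.
    rewrite (cutid X hcon); apply: sumr_le0 => e _.
    case h1: (side X (ends e).1); case h2: (side X (ends e).2) => /=.
    - by rewrite subrr mulr0.
    - have : ~~ pos phi (e, true).
        by apply/negP => r; have := hX _ r; rewrite tl_true hd_true h1 h2 => /(_ isT).
      rewrite /pos /fa /sg /= mul1r -leNgt => h; rewrite subr0 mulr1 //.
    - have : ~~ pos phi (e, false).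
        by apply/negP => r; have := hX _ r; rewrite tl_false hd_false h1 h2 => /(_ isT).
      rewrite /pos /fa /sg /= mulN1r -leNgt oppr_le0 => h; rewrite sub0r mulrN1 oppr_le0 //.
    - by rewrite subrr mulr0.
  by rewrite hv; lia.
pose phi' := upd phi p (-1).
have [hcon' hv'] := upd_ok (-1) hcon gp.
have hcap' : cap_ok phi'.
  apply: upd_cap => // a ap; have := allP okp a ap; rewrite /pos => h.
  have := cap_fa a hcap; rewrite ler_norml => /andP [h3 h4].
  set x := fa phi a in h h3 h4 *; set y := m a.1 in h h3 h4 *; apply/andP; split; lia.
have hlt a : a \in p -> `|phi' a.1| < `|phi a.1|.
  move=> ap; rewrite -!norm_fa fa_upd_in //.
  have := allP okp a ap; rewrite /pos => h.
  set x := fa phi a in h *.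
  rewrite (@ger0_norm _ (x + -1)); last by lia.
  rewrite gtr0_norm //; lia.
have hle e : `|phi' e| <= `|phi e|.
  case: (boolP (e \in map fst p)) => [/mapP [a ap ->]|ne].
    by apply: ltW; apply: hlt.
  by rewrite /phi' upd_notin.
have hv2 : value phi' = n%:Z by rewrite hv' hv; lia.
have [rs [hs hg hu hb]] := IH phi' hcap' hcon' hv2.
exists ([seq (a, absz (phi' a.1)) | a <- p] :: rs); split => //=.
- by rewrite hs.
- rewrite hg andbT; apply/existsP; exists u.
  by rewrite -map_comp map_id_in.
- rewrite cat_uniq hu andbT; apply/andP; split.
    apply: (@map_uniq _ _ fst); rewrite -!map_comp.
    by rewrite (@eq_map _ _ _ fst).
  apply/hasPn => s /flattenP [sr /mapP [r rrs ->] /mapP [ai air ->]].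
  apply/negP => /mapP [b /mapP [a ap ->] /= [e1 e2]].
  have := hb r ai rrs air; rewrite e1 e2 abszE => h.
  by move: h; rewrite /slotof /= -e1 ltxx.
- move=> r ai; rewrite inE => /orP [/eqP ->|rrs].
    move=> /mapP [a ap ->] /=; rewrite abszE; exact: hlt.
  move=> air; apply: lt_le_trans (hb r ai rrs air) (hle _).
Qed.

End Flow.

Section Tensor.
Variables (S T V E : finType) (ends : E -> node S T V * node S T V) (c : E -> nat).
Variable C : numClosedFieldType.
Variables (d : nat) (m : E -> nat).
Hypothesis hd0 : (0 < d)%N.
Hypothesis hcm : forall e, c e = (d ^ m e)%N.
Hypothesis hdeg : open_ends_degree_one ends.
Variable rs : seq (seq ((E * bool) * nat)).
Hypothesis hgood : all (fun r => [exists u, good ends (inl u) (map fst r)]) rs.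
Hypothesis huniq : uniq (flatten (map (map (@slotof E)) rs)).
Hypothesis hbound : forall r ai, r \in rs -> ai \in r -> (ai.2 < m ai.1.1)%N.

Local Notation n := (size rs).
Local Notation EA := (edge_assign c).
Definition z0 : 'I_d := Ordinal hd0.
Local Notation FF e := {ffun 'I_(m e) -> 'I_d}.

Lemma hcardF e : #|{: FF e}| = c e.
Proof. by rewrite card_ffun !card_ord hcm. Qed.

Definition build e (f : FF e) : 'I_(c e) := cast_ord (hcardF e) (enum_rank f).
Definition dig e (w : 'I_(c e)) : FF e := enum_val (cast_ord (esym (hcardF e)) w).
Lemma digK e (f : FF e) : dig (build f) = f.
Proof. by rewrite /dig /build cast_ordK enum_rankK. Qed.
Lemma buildK e (w : 'I_(c e)) : build (dig w) = w.
Proof. by rewrite /build /dig enum_valK cast_ordKV. Qed.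
Lemma dig_inj e : injective (@dig e).
Proof. exact: can_inj (@buildK e). Qed.

Definition digN e (f : FF e) (i : nat) : 'I_d :=
  if (insub i : option 'I_(m e)) is Some k then f k else z0.
Lemma digN_ord e (f : FF e) (k : 'I_(m e)) : digN f k = f k.
Proof. by rewrite /digN valK. Qed.

Definition usedby e (k : 'I_(m e)) : option 'I_n :=
  [pick j : 'I_n | (e, val k) \in map (@slotof E) (nth [::] rs j)].

Lemma uniq_flat (A : eqType) : forall (L : seq (seq A)), uniq (flatten L) ->
  forall (j j' : nat) x, (j < size L)%N -> (j' < size L)%N ->
  x \in nth [::] L j -> x \in nth [::] L j' -> j = j'.
Proof.
elim=> [|s L IH] //= hu [|j] [|j'] x //=; move: hu; rewrite cat_uniq => /and3P [_ hn hu].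
- move=> _ hj' xs xL; case/negP: hn; apply/hasP; exists x => //.
  by apply/flattenP; exists (nth [::] L j') => //; apply: mem_nth.
- move=> hj _ xL xs; case/negP: hn; apply/hasP; exists x => //.
  by apply/flattenP; exists (nth [::] L j) => //; apply: mem_nth.
- by move=> hj hj' h1 h2; congr (_.+1); apply: IH h1 h2.
Qed.

Lemma usedby_spec (j : 'I_n) ai (hi : (ai.2 < m ai.1.1)%N) :
  ai \in nth [::] rs j -> usedby (Ordinal hi) = Some j.
Proof.
move=> aij; rewrite /usedby; case: pickP => [j' hj'|hn]; last first.
  by move: (hn j); rewrite /= (map_f (@slotof E) aij).
congr Some; apply: val_inj => /=.
have hL : forall k : 'I_n, nth [::] (map (map (@slotof E)) rs) k = map (@slotof E) (nth [::] rs k).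
  by move=> k; rewrite (nth_map [::]).
apply: (@uniq_flat _ _ huniq j' j (ai.1.1, ai.2)); rewrite ?size_map //.
  by rewrite hL.
by rewrite hL (map_f (@slotof E) aij).
Qed.

Lemma usedby_some e (k : 'I_(m e)) j : usedby k = Some j ->
  exists2 ai, ai \in nth [::] rs j & (ai.1.1 = e /\ ai.2 = k).
Proof.
rewrite /usedby; case: pickP => // j' hj' [<-].
by case/mapP: hj' => ai aij [e1 e2]; exists ai.

Qed.

Definition Wpat (x : {ffun 'I_n -> 'I_d}) : EA :=
  finfun (fun e => build [ffun k => if usedby k is Some j then x j else z0]).

Lemma dig_Wpat x e (k : 'I_(m e)) :
  dig (Wpat x e) k = if usedby k is Some j then x j else z0.
Proof. by rewrite ffunE digK ffunE. Qed.

Lemma nth_in (j : 'I_n) : nth [::] rs j \in rs.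
Proof. exact: mem_nth. Qed.

Lemma digN_Wpat x (j : 'I_n) ai : ai \in nth [::] rs j ->
  digN (dig (Wpat x ai.1.1)) ai.2 = x j.
Proof.
move=> aij; have hi := hbound (nth_in j) aij.
have -> : ai.2 = val (Ordinal hi) by [].
by rewrite digN_ord dig_Wpat (usedby_spec hi aij).
Qed.

Local Open Scope ring_scope.

Definition Tn : tensor_assign ends c C := fun v =>
  [ffun L => (([exists x, L == restrict ends (Wpat x) v]) : bool)%:R].

Definition validW (W : EA) : bool :=
  [forall v, [exists x, restrict ends W v == restrict ends (Wpat x) v]].

Lemma prodTn W : \prod_v Tn v (restrict ends W v) = (validW W)%:R.
Proof.
case: (boolP (validW W)) => [/forallP H|/forallPn [v Hv]].
  by rewrite big1 // => v _; rewrite ffunE (H v).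
by rewrite (bigD1 v) //= ffunE (negbTE Hv) mul0r.
Qed.

Lemma validW_at W v : validW W -> exists xv, forall h,
  hend ends h = inr (inr v) -> W h.1 = Wpat xv h.1.
Proof.
move/forallP/(_ v)/existsP => [xv /eqP E1]; exists xv => h hh.
have pf : hend ends h == inr (inr v) by rewrite hh.
move/ffunP: E1 => /(_ (Sub h pf : incident ends v)).
by rewrite !ffunE.
Qed.


Local Notation FX := {ffun 'I_n -> 'I_d}.

Definition ISx (x : FX) : in_assign ends c :=
  finfun (fun u : S => match [pick h : E * bool | hend ends h == inl u] as o
     return 'I_(if o is Some h then c h.1 else 1) with
     | Some h => Wpat x h.1 | None => ord0 end).

Definition ITx (x : FX) : out_assign ends c :=
  finfun (fun t : T => match [pick h : E * bool | hend ends h == inr (inl t)] as o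
     return 'I_(if o is Some h then c h.1 else 1) with
     | Some h => Wpat x h.1 | None => ord0 end).

Lemma val_match (o : option (E * bool)) (f : forall h : E * bool, 'I_(c h.1)) :
  val (match o as o return 'I_(if o is Some h then c h.1 else 1) with
       | Some h => f h | None => ord0 end) = if o is Some h then val (f h) else 0%N.
Proof. by case: o. Qed.

Lemma ISx_val x u h : hend ends h = inl u -> val (ISx x u) = val (Wpat x h.1).
Proof.
move=> hh; rewrite ffunE (val_match _ (fun h => Wpat x h.1)); case: pickP => [h' /eqP hh'|hn]; last first.
  by move: (hn h); rewrite hh eqxx.
have c1 : (#|[pred h0 : E * bool | hend ends h0 == inl u]| <= 1)%N.
  by rewrite (hdeg.1 u).
have := card_le1_eqP c1 h' h; rewrite !inE hh hh' !eqxx => /(_ isT isT) ->.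
by [].
Qed.

Lemma ITx_val x t h : hend ends h = inr (inl t) -> val (ITx x t) = val (Wpat x h.1).
Proof.
move=> hh; rewrite ffunE (val_match _ (fun h => Wpat x h.1)); case: pickP => [h' /eqP hh'|hn]; last first.
  by move: (hn h); rewrite hh eqxx.
have c1 : (#|[pred h0 : E * bool | hend ends h0 == inr (inl t)]| <= 1)%N.
  by rewrite (hdeg.2 t).
have := card_le1_eqP c1 h' h; rewrite !inE hh hh' !eqxx => /(_ isT isT) ->.
by [].
Qed.

Lemma chain W x (hv : validW W)
  (hin : forall h u, hend ends h = inl u -> W h.1 = Wpat x h.1) (j : 'I_n) :
  forall ai, ai \in nth [::] rs j -> digN (dig (W ai.1.1)) ai.2 = x j.
Proof.
set r := nth [::] rs j.
have [u gu] : exists u, good ends (inl u) (map fst r).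
  by have := allP hgood r (nth_in j) => /existsP.
suff H : forall r', (forall ai, ai \in r' -> ai \in r) -> forall x0,
    good ends x0 (map fst r') ->
    (if r' is ai :: _ then digN (dig (W ai.1.1)) ai.2 = x j else True) ->
    forall ai, ai \in r' -> digN (dig (W ai.1.1)) ai.2 = x j.
  apply: (H r (fun _ h => h) (inl u) gu).
  clear H; move: gu; rewrite /r.
  case Er: (nth [::] rs j) => [|ai r'] //= /andP [/eqP htl _].
  have air : ai \in nth [::] rs j by rewrite Er inE eqxx.
  by rewrite (hin ai.1 u htl) (digN_Wpat x air).
elim=> [|ai r' IH] // hsub x0 /= /andP [_ hg] hst b.
rewrite inE => /orP [/eqP -> //|br'].
case: r' IH hsub hg br' => [|bi r''] // IH hsub /andP [hV hg'] br'.
case Ehd: (hd ends ai.1) hV => [|[|v]] // _.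
have [xv hxv] := validW_at v hv.
have ai_r : ai \in r by apply: hsub; rewrite inE eqxx.
have bi_r : bi \in r by apply: hsub; rewrite !inE eqxx orbT.
have e1 : W ai.1.1 = Wpat xv ai.1.1 by apply: (hxv (ai.1.1, ~~ ai.1.2)).
have hxj : xv j = x j by rewrite -(digN_Wpat xv ai_r) -e1.
apply: (IH _ (hd ends ai.1)) => //.
- by move=> a ha; apply: hsub; rewrite inE ha orbT.
- move: hg' => /= /andP [/eqP htl _].
  rewrite (hxv bi.1); last by rewrite -/(tl ends bi.1) htl.
  by rewrite (digN_Wpat xv bi_r).
Qed.


Lemma key x y W :
  agrees (ISx x) (ITx y) W && validW W = (x == y) && (W == Wpat x).
Proof.
apply/idP/idP.
  case/andP => ha hv.
  have hin : forall h u, hend ends h = inl u -> W h.1 = Wpat x h.1.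
    move=> h u hh; apply: val_inj; move/forallP/(_ h): ha; rewrite hh => /eqP ->.
    exact: ISx_val.
  have hout : forall h t, hend ends h = inr (inl t) -> W h.1 = Wpat y h.1.
    move=> h t hh; apply: val_inj; move/forallP/(_ h): ha; rewrite hh => /eqP ->.
    exact: ITx_val.
  have exy : x = y.
    apply/ffunP => j.
    have := allP hgood _ (nth_in j) => /existsP [u gu].
    have [a ain hT] := good_out gu.
    case/mapP: ain => ai air ea; subst a.
    rewrite -(chain hv hin air).
    case Eh: (hd ends ai.1) hT => [|[t|]] // _.
    by rewrite (hout (ai.1.1, ~~ ai.1.2) t Eh) (digN_Wpat y air).
  subst y; rewrite eqxx /=.
  apply/eqP/ffunP => e; apply: dig_inj; apply/ffunP => k.
  rewrite dig_Wpat; case hu: (usedby k) => [j|].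
    have [ai aij [e1 e2]] := usedby_some hu.
    have := chain hv hin aij; rewrite e2.
    move: e1 aij; case: ai {e2} => [[e' b] i] /= e1 aij; subst e'.
    by rewrite digN_ord.
  case E1: (ends e).1 => [u|[t|v]].
  - by have := hin (e, true) u E1 => /= ->; rewrite dig_Wpat hu.
  - by have := hout (e, true) t E1 => /= ->; rewrite dig_Wpat hu.
  - have [xv hxv] := validW_at v hv.
    by have := hxv (e, true) E1 => /= ->; rewrite dig_Wpat hu.
case/andP => /eqP <- /eqP ->; apply/andP; split.
  apply/forallP => h; case E1: (hend ends h) => [u|[t|v]] //.
    by rewrite (ISx_val x E1).
  by rewrite (ITx_val x E1).
by apply/forallP => v; apply/existsP; exists x.
Qed.

Lemma entry x y : beta_entry Tn (ISx x) (ITx y) = (x == y)%:R.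
Proof.
rewrite /beta_entry.
transitivity (\sum_(W : EA) (((agrees (ISx x) (ITx y) W && validW W) : bool)%:R : C)).
  rewrite big_mkcond; apply: eq_bigr => W _; rewrite prodTn.
  by case: (agrees _ _ W).
under eq_bigr do rewrite key.
case: eqP => [_|ne] /=.
  rewrite (bigD1 (Wpat x)) //= eqxx big1 ?addr0 // => W /negbTE -> //.
by rewrite big1.
Qed.

Lemma sum_ind (J : finType) (j0 : J) (F : J -> C) :
  \sum_j F j * (j0 == j)%:R = F j0.
Proof.
rewrite (bigD1 j0) //= eqxx mulr1 big1 ?addr0 // => j /negbTE.
by rewrite eq_sym => ->; rewrite mulr0.
Qed.

Lemma sum_ind' (J : finType) (j0 : J) (F : J -> C) :
  \sum_j (j0 == j)%:R * F j = F j0.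
Proof. by rewrite -[RHS](sum_ind j0); apply: eq_bigr => j _; rewrite mulrC. Qed.

Lemma rank_lower : (d ^ n <= \rank (beta_mx Tn))%N.
Proof.
pose K := #|{: FX}|.
pose Cm : 'M[C]_(#|{: in_assign ends c}|, K) :=
  \matrix_(j, k) (enum_rank (ISx (enum_val k)) == j)%:R.
pose Rm : 'M[C]_(K, #|{: out_assign ends c}|) :=
  \matrix_(k, i) (enum_rank (ITx (enum_val k)) == i)%:R.
have H : Rm *m beta_mx Tn *m Cm = 1%:M.
  apply/matrixP => k l; rewrite !mxE.
  under eq_bigr do rewrite !mxE.
  rewrite sum_ind.
  under eq_bigr do rewrite !mxE.
  rewrite sum_ind' !enum_rankK entry.
  by rewrite (inj_eq enum_val_inj) eq_sym.
have hK : K = (d ^ n)%N by rewrite /K card_ffun !card_ord.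
rewrite -hK -[X in (X <= _)%N](mxrank1 C K) -H.
apply: leq_trans (mxrankM_maxl _ _) _; exact: mxrankM_maxr.
Qed.

End Tensor.

Lemma bigmin_le (I : finType) (F : I -> nat) x0 i :
  (\big[minn/x0]_(j : I) F j <= F i)%N.
Proof.
have : i \in index_enum I by rewrite mem_index_enum.
elim: (index_enum I) => [|a r IH] //; rewrite inE big_cons => /orP [/eqP <-|ir].
  exact: geq_minl.
exact: leq_trans (geq_minr _ _) (IH ir).
Qed.

Unset Implicit Arguments.

Theorem theorem3p8 (C : numClosedFieldType) (S T V E : finType)
    (ends : E -> node S T V * node S T V) (c : E -> nat) :
  open_ends_degree_one ends ->
  (forall e : E, (0 < c e)%N) ->
  (exists d : nat, (0 < d)%N /\ forall e : E, exists m : nat, c e = (d ^ m)%N) ->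
  @is_QMF S T V E ends c C (QMC ends c).
Proof.
move=> hdeg hc0 [d [hd0 hm]].
have hm' : forall e, exists k, c e == (d ^ k)%N.
  by move=> e; have [k hk] := hm e; exists k; rewrite hk.
pose m := fun e => ex_minn (hm' e).
have hcm : forall e, c e = (d ^ m e)%N.
  by move=> e; rewrite /m; case: ex_minnP => k /eqP.
have [Xs hXs] : exists Xs, QMC ends c = cut_cap ends c Xs.
  rewrite /QMC; apply: (big_ind (fun y => exists Xs, y = cut_cap ends c Xs)).
  - by exists set0.
  - move=> a b [X1 ->] [X2 ->]; rewrite /minn; case: ltnP => _.
      by exists X1.
    by exists X2.
  - by move=> X _; exists X.
have hup : forall Tn : tensor_assign ends c C, (\rank (beta_mx Tn) <= QMC ends c)%N.
  by move=> Tn; rewrite hXs; apply: upper_bound.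
split => //.
have [phi [hcap hcon [X hX]]] := maxflow ends m.
have h0 : (0 <= scutz ends m X)%R by apply: sumr_ge0.
pose n := absz (value ends phi).
have hvn : value ends phi = Posz n.
  by rewrite /n gez0_abs //; apply: le_trans hX.
have [rs [hs hg hu hb]] := decompose hcap hcon hvn.
have hbound : forall r ai, r \in rs -> ai \in r -> (ai.2 < m ai.1.1)%N.
  move=> r ai hr hai; have h1 := hb r ai hr hai; have h2 := hcap ai.1.1.
  have h3 : (`|phi ai.1.1| <= Posz (m ai.1.1))%R by exact: h2.
  have : (Posz ai.2 < Posz (m ai.1.1))%R by apply: lt_le_trans h1 h3.
  by rewrite ltz_nat.
have hlow := rank_lower C hd0 hcm hdeg hg hu hbound.
exists (Tn ends C hd0 hcm rs).
apply/eqP; rewrite eqn_leq hup /=.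
apply: leq_trans hlow; rewrite hs.
have hQ : (QMC ends c <= cut_cap ends c X)%N.
  exact: bigmin_le.
apply: leq_trans hQ _.
have -> : cut_cap ends c X = (d ^ (\sum_(e in cut_set ends X) m e))%N.
  by rewrite /cut_cap expn_sum; apply: eq_bigr => e _; rewrite hcm.
apply: leq_pexp2l => //.
have : (Posz (\sum_(e in cut_set ends X) m e) <= Posz n)%R.
  rewrite -hvn; apply: le_trans hX; rewrite /scutz.
  by rewrite (big_morph Posz PoszD (erefl _)).
by rewrite lez_nat.
Qed.
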